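(* Let $(\mathcal{X},c)$ be a metric space with diameter at most $1$, let $\mu,\nu$ be probability distributions on $\mathcal{X}$, and let $p\ge 1$, $k\ge 0$. Suppose $W_{p,1-\alpha}(\mu,\nu)=k\beta$ for some $\alpha\in[0,1]$ and $\beta\ge 0$. Then $\mathrm{RPW}_{p,k}(\mu,\nu)\le\max\{\alpha,\beta\}$. Furthermore, if $k\neq 0$, then $\mathrm{RPW}_{p,k}(\mu,\nu)\ge\min\{\alpha,\beta\}$.
   Context: $(\mathcal{X},c)$ is a metric space with $c(x,y)\le 1$ for all $x,y$; distributions are Borel probability measures. For $p\in[1,\infty)$ and $\alpha\in[0,1]$, a partial transport plan of mass $\alpha$ between $\mu$ and $\nu$ is a nonnegative measure $\gamma$ on $\mathcal{X}\times\mathcal{X}$ of total mass $\alpha$ with first marginal $\le\mu$ and second marginal $\le\nu$ (setwise); its cost is $w_p(\gamma)=(\int c^p\,d\gamma)^{1/p}$. $W_{p,\alpha}(\mu,\nu)$ is the infimum of $w_p(\gamma)$ over such $\gamma$. For $k\ge0$, $\mathrm{RPW}_{p,k}(\mu,\nu)=\inf\{\varepsilon\in[0,1]: W_{p,1-\varepsilon}(\mu,\nu)\le k\varepsilon\}$. *)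

(* Defs.v *)
From HB Require Import structures.
From mathcomp Require Import all_boot all_order all_algebra.
From mathcomp Require Import all_classical all_reals all_analysis.
Set Implicit Arguments. Unset Strict Implicit. Unset Printing Implicit Defensive.
Import Order.TTheory GRing.Theory Num.Theory.
Local Open Scope classical_set_scope.
Local Open Scope ring_scope.

Definition bounded_metric {R : realType} {T : Type} (c : T -> T -> R) : Prop :=
  [/\ forall x y, 0 <= c x y,
      forall x y, c x y = 0 <-> x = y,
      forall x y, c x y = c y x,
      forall x y z, c x z <= c x y + c y z
    & forall x y, c x y <= 1].

Definition c_open {R : realType} {T : Type} (c : T -> T -> R) (A : set T) : Prop :=
  forall x, A x -> exists r : R, 0 < r /\ [set y | c x y < r] `<=` A.

Definition borel_for {R : realType} {d : measure_display} {T : measurableType d}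
  (c : T -> T -> R) : Prop :=
  @measurable d T = <<s [set A | c_open c A] >>.

Definition partial_plan {R : realType} {d : measure_display} {T : measurableType d}
  (a : R) (mu nu : {measure set T -> \bar R})
  (g : {measure set (T * T) -> \bar R}) : Prop :=
  [/\ g setT = a%:E,
      forall A, measurable A -> g (A `*` setT) <= mu A
    & forall A, measurable A -> g (setT `*` A) <= nu A]%E.

Definition wp {R : realType} {d : measure_display} {T : measurableType d}
  (c : T -> T -> R) (p : R) (g : {measure set (T * T) -> \bar R}) : \bar R :=
  poweR (\int[g]_z ((c z.1 z.2) `^ p)%:E)%E p^-1.

Definition Wpa {R : realType} {d : measure_display} {T : measurableType d}
  (c : T -> T -> R) (p a : R) (mu nu : {measure set T -> \bar R}) : \bar R :=
  ereal_inf [set wp c p g | g in [set g | partial_plan a mu nu g]].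

Definition RPW {R : realType} {d : measure_display} {T : measurableType d}
  (c : T -> T -> R) (p k : R) (mu nu : {measure set T -> \bar R}) : R :=
  inf [set e : R | 0 <= e <= 1 /\ (Wpa c p (1 - e) mu nu <= (k * e)%:E)%E].

(* Main.v *)
Require Import Defs.
From HB Require Import structures.
From mathcomp Require Import all_boot all_order all_algebra.
From mathcomp Require Import all_classical all_reals all_analysis.
Import Order.TTheory GRing.Theory Num.Theory.
Local Open Scope classical_set_scope.
Local Open Scope ring_scope.
Import HBNNSimple.

Lemma int_le_measure (R : realType) (d : measure_display) (X : measurableType d)
  (m1 m2 : {measure set X -> \bar R}) (f : X -> \bar R) :
  (forall A, measurable A -> (m1 A <= m2 A)%E) -> (forall x, (0 <= f x)%E) ->
  (\int[m1]_x f x <= \int[m2]_x f x)%E.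
Proof.
move=> h f0; rewrite !ge0_integralTE//.
apply: ge_ereal_sup => _ [g hg <-].
apply: le_ereal_sup_tmp; exists (sintegral m2 g); first by exists g.
rewrite !sintegralE; apply: lee_fsum; first exact: fimfunP.
move=> r [x _ <-]; apply: lee_wpmul2l; first by rewrite lee_fin.
exact: h.
Qed.

Lemma Wpa_mono (R : realType) (d : measure_display) (T : measurableType d)
  (c : T -> T -> R) (p a b : R) (mu nu : {measure set T -> \bar R}) :
  0 < p -> 0 <= a -> a <= b -> (Wpa c p a mu nu <= Wpa c p b mu nu)%E.
Proof.
move=> p0 a0 ab.
have [b0|bn0] := eqVneq b 0.
  by have -> : a = b by apply/le_anti; rewrite ab b0 a0.
have b0 : 0 < b by rewrite lt0r bn0 (le_trans a0 ab).
apply: le_ereal_inf_tmp => _ [g [g1 g2 g3] <-].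
have r0 : 0 <= a / b by rewrite divr_ge0// ltW.
have r1 : a / b <= 1 by rewrite ler_pdivrMr// mul1r.
pose r : {nonneg R} := NngNum r0.
pose g' := mscale r g.
apply: (@le_trans _ _ (wp c p g')).
  apply: ereal_inf_lbound; exists g' => //.
  split.
  - by rewrite /g' /= /mscale /= g1 -EFinM divfK.
  - move=> A mA; apply: le_trans (g2 A mA).
    rewrite /g' /= /mscale /=; apply: (@le_trans _ _ (1%:E * g (A `*` setT))%E); last by rewrite mul1e.
    by apply: lee_wpmul2r => //; rewrite lee_fin.
  - move=> A mA; apply: le_trans (g3 A mA).
    rewrite /g' /= /mscale /=; apply: (@le_trans _ _ (1%:E * g (setT `*` A))%E); last by rewrite mul1e.
    by apply: lee_wpmul2r => //; rewrite lee_fin.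
  rewrite /wp. have hp : 0 <= p^-1 by rewrite invr_ge0 ltW.
  have := @gt0_ler_poweR R _ hp. move=> H. apply: H.
  - rewrite in_itv /= leey andbT; apply: integral_ge0 => z _.
    by rewrite lee_fin powR_ge0.
  - rewrite in_itv /= leey andbT; apply: integral_ge0 => z _.
    by rewrite lee_fin powR_ge0.
  apply: int_le_measure => [A mA|z]; last by rewrite lee_fin powR_ge0.
  rewrite /g' /= /mscale /=; apply: (@le_trans _ _ (1%:E * g A)%E); last by rewrite mul1e.
  by apply: lee_wpmul2r => //; rewrite lee_fin.
Qed.

Lemma W0_le0 (R : realType) (d : measure_display) (T : measurableType d)
  (c : T -> T -> R) (p : R) (mu nu : {measure set T -> \bar R}) :
  0 < p -> (Wpa c p 0 mu nu <= 0)%E.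
Proof.
move=> p0; apply: (@le_trans _ _ (wp c p (@mzero _ (T * T)%type R))).
  apply: ereal_inf_lbound; exists (@mzero _ (T * T)%type R) => //.
  split => [|A _|A _]; first reflexivity; exact: measure_ge0.
by rewrite /wp integral_measure_zero poweR0r// invr_neq0// gt_eqF.
Qed.

Theorem lemma2p2 (R : realType) (d : measure_display) (T : measurableType d)
  (c : T -> T -> R) (hc : bounded_metric c) (hborel : borel_for c)
  (mu nu : probability T R) (p k alpha beta : R)
  (hp : 1 <= p) (hk : 0 <= k) (ha : 0 <= alpha <= 1) (hb : 0 <= beta)
  (hW : Wpa c p (1 - alpha) mu nu = (k * beta)%:E) :
  RPW c p k mu nu <= Num.max alpha beta /\
  (k != 0 -> Num.min alpha beta <= RPW c p k mu nu).
Proof.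
have p0 : 0 < p by apply: lt_le_trans hp.
move/andP: ha => [a0 a1].
set S := [set e : R | 0 <= e <= 1 /\ (Wpa c p (1 - e) mu nu <= (k * e)%:E)%E].
have lbS : has_lbound S by exists 0 => e [/andP[]].
have S1 : S 1.
  split; first by rewrite lexx ler01.
  by rewrite subrr (le_trans (@W0_le0 _ _ _ c p mu nu p0))// lee_fin mulr1.
have infS e : S e -> RPW c p k mu nu <= e by move=> Se; exact: ge_inf.
split.
  have [ba|ab] := leP beta alpha.
    have Sa : S alpha.
      split; first by rewrite a0 a1.
      by rewrite hW lee_fin ler_wpM2l.
    exact: infS.
  have [b1|b1] := leP beta 1; last first.
    by apply: (le_trans (infS 1 S1)); rewrite ltW.
  have Sb : S beta.
    split; first by rewrite hb b1.
    rewrite -hW; apply: Wpa_mono => //; first by rewrite subr_ge0.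
    by rewrite lerB// ltW.
  exact: infS.
move=> kn0; have k0 : 0 < k by rewrite lt0r kn0.
apply: lb_le_inf; first by exists 1.
move=> e [/andP[e0 e1] He]; rewrite leNgt; apply/negP => lt.
rewrite lt_min in lt; case/andP: lt => ea eb.
have : (Wpa c p (1 - alpha) mu nu <= Wpa c p (1 - e) mu nu)%E.
  by apply: Wpa_mono; rewrite ?subr_ge0// lerB// ltW.
rewrite hW => /le_trans /(_ He); rewrite lee_fin ler_pM2l// leNgt eb //.
Qed.
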